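(* Let $\mathfrak d$ be a delta operator with basic sequence $(p_n(x))_{n\ge0}$, $\mathcal Z$ a grid, and for each $j\in\mathbb N$ let $(t^{(j)}_n(x))_{n\ge0}$ be the generalized Gončarov basis associated with $(\mathfrak d,\mathcal Z^{(j)})$ (so $t_n=t^{(0)}_n$ is the basis for $(\mathfrak d,\mathcal Z)$). Then for all $\xi\in\mathbb K$ and $n\in\mathbb N$, $$t_n(x+\xi)=\sum_{i=0}^n\binom ni t^{(i)}_{n-i}(\xi)\,p_i(x),\qquad\text{in particular}\qquad t_n(x)=\sum_{i=0}^n\binom ni t^{(i)}_{n-i}(0)\,p_i(x).$$
   Context: $\mathbb K$ is a field of characteristic zero; a delta operator is a linear operator $\mathfrak d$ on $\mathbb K[x]$ commuting with all shifts $E_a:f(x)\mapsto f(x+a)$ and with $\mathfrak d(x)$ a nonzero constant; its basic sequence is the unique $(p_n)$ with $\deg p_n=n$, $p_0=1$, $p_n(0)=0$ ($n\ge1$), $\mathfrak dp_n=np_{n-1}$. $\varepsilon_z$ is evaluation at $z$. A grid is a sequence $\mathcal Z=(z_i)_{i\ge0}$ in $\mathbb K$, and $\mathcal Z^{(j)}=(z_{i+j})_{i\ge0}$. The generalized Gončarov basis associated with $(\mathfrak d,\mathcal Z)$ is the unique sequence $(t_n)_{n\ge0}$ with $\deg t_n=n$ and $\varepsilon_{z_i}(\mathfrak d^{\,i}(t_n))=n!\,\delta_{i,n}$ for all $i,n$. *)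

(* Defs.v *)
From HB Require Import structures.
From mathcomp Require Import all_boot all_order all_algebra.
Set Implicit Arguments. Unset Strict Implicit. Unset Printing Implicit Defensive.
Import Order.TTheory GRing.Theory Num.Theory.
Local Open Scope ring_scope.

Definition shiftp (K : fieldType) (a : K) (f : {poly K}) : {poly K} :=
  f \Po ('X + a%:P).

Definition is_delta_op (K : fieldType) (d : {poly K} -> {poly K}) : Prop :=
  (forall (c : K) (f g : {poly K}), d (c *: f + g) = c *: d f + d g) /\
  (forall (a : K) (f : {poly K}), d (shiftp a f) = shiftp a (d f)) /\
  (exists c : K, c != 0 /\ d 'X = c%:P).

Definition is_basic_seq (K : fieldType) (d : {poly K} -> {poly K})
  (p : nat -> {poly K}) : Prop :=
  (forall n, size (p n) = n.+1) /\
  p 0%N = 1 /\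
  (forall n, (p n.+1).[0] = 0) /\
  (forall n, d (p n.+1) = n.+1%:R *: p n).

Definition is_goncarov_basis (K : fieldType) (d : {poly K} -> {poly K})
  (z : nat -> K) (t : nat -> {poly K}) : Prop :=
  (forall n, size (t n) = n.+1) /\
  (forall i n, (iter i d (t n)).[z i] = if i == n then (n`!)%:R else 0).

(* Main.v *)
Require Import Defs.
From HB Require Import structures.
From mathcomp Require Import all_boot all_order all_algebra.
From mathcomp Require Import zify ring.
Import Order.TTheory GRing.Theory Num.Theory.
Local Open Scope ring_scope.
Set Implicit Arguments. Unset Strict Implicit.

Section Aux.
Variable K : fieldType.
Hypothesis Kchar0 : [pchar K] =i pred0.
Variable d : {poly K} -> {poly K}.
Hypothesis dlin : forall (c : K) (f g : {poly K}), d (c *: f + g) = c *: d f + d g.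
Hypothesis dshift : forall (a : K) (f : {poly K}), d (shiftp a f) = shiftp a (d f).
Variable cX : K.
Hypothesis dX : d 'X = cX%:P.
Variable p : nat -> {poly K}.
Hypothesis psize : forall n, size (p n) = n.+1.
Hypothesis p0 : p 0%N = 1.
Hypothesis pz : forall n, (p n.+1).[0] = 0.
Hypothesis dp : forall n, d (p n.+1) = n.+1%:R *: p n.

Lemma fact_neq0 m : (m`!)%:R != 0 :> K.
Proof. by rewrite ((pcharf0P K).1 Kchar0) -lt0n fact_gt0. Qed.

Lemma dD f g : d (f + g) = d f + d g.
Proof. by have := dlin 1 f g; rewrite !scale1r. Qed.

Lemma d0 : d 0 = 0.
Proof. have h := dD 0 0; rewrite addr0 in h. by apply: (addrI (d 0)); rewrite addr0 -h. Qed.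

Lemma dZ c f : d (c *: f) = c *: d f.
Proof. by have := dlin c f 0; rewrite !addr0 d0 addr0. Qed.

Lemma dN f : d (- f) = - d f.
Proof. by apply: (addrI (d f)); rewrite -dD !subrr d0. Qed.

Lemma d1 : d 1 = 0.
Proof.
have := dshift 1 'X; rewrite /shiftp comp_polyX dX comp_polyC dD dX polyC1.
by move=> /eqP; rewrite -{2}(addr0 cX%:P) (inj_eq (addrI _)) => /eqP.
Qed.

Lemma iD k f g : iter k d (f + g) = iter k d f + iter k d g.
Proof. by elim: k => //= k IH; rewrite IH dD. Qed.
Lemma i0 k : iter k d 0 = 0.
Proof. by elim: k => //= k IH; rewrite IH d0. Qed.
Lemma iZ k c f : iter k d (c *: f) = c *: iter k d f.
Proof. by elim: k => //= k IH; rewrite IH dZ. Qed.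
Lemma iN k f : iter k d (- f) = - iter k d f.
Proof. by elim: k => //= k IH; rewrite IH dN. Qed.
Lemma iB k f g : iter k d (f - g) = iter k d f - iter k d g.
Proof. by rewrite iD iN. Qed.
Lemma isum k n (F : 'I_n -> {poly K}) :
  iter k d (\sum_(i < n) F i) = \sum_(i < n) iter k d (F i).
Proof. exact: (big_morph (iter k d) (iD k) (i0 k)). Qed.
Lemma dsum n (F : 'I_n -> {poly K}) : d (\sum_(i < n) F i) = \sum_(i < n) d (F i).
Proof. exact: (isum 1). Qed.

Lemma idp k i : iter k d (p i) = (i ^_ k)%:R *: p (i - k).
Proof.
elim: k => [|k IH] /=; first by rewrite ffactn0 subn0 scale1r.
rewrite IH dZ ffactnSr; case: (ltnP k i) => h.
  rewrite (_ : (i - k)%N = (i - k.+1).+1); last by lia.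
  by rewrite dp scalerA -natrM.
rewrite (_ : (i - k)%N = 0%N); last by lia.
by rewrite p0 d1 scaler0 muln0 scale0r.
Qed.

Lemma bigsize n k (F : 'I_n -> {poly K}) :
  (forall i, (size (F i) <= k)%N) -> (size (\sum_(i < n) F i)%R <= k)%N.
Proof.
move=> h; apply: (big_ind (fun q : {poly K} => is_true (size q <= k)%N)) => //.
  by rewrite size_poly0.
by move=> x y hx hy; rewrite (leq_trans (size_polyD _ _)) // geq_max hx hy.
Qed.

Lemma expand n (f : {poly K}) : (size f <= n.+1)%N ->
  exists a : nat -> K, f = \sum_(i < n.+1) a i *: p i.
Proof.
elim: n f => [|n IH] f hf.
  exists (fun _ => f`_0); rewrite big_ord1 p0 alg_polyC.
  exact: size1_polyC hf.
set c := f`_n.+1 / lead_coef (p n.+1).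
have hl : lead_coef (p n.+1) != 0 by rewrite lead_coef_eq0 -size_poly_eq0 psize.
have hg : (size (f - c *: p n.+1)%R <= n.+1)%N.
  apply/leq_sizeP => j hj; rewrite coefB coefZ.
  case: (ltnP n.+1 j) => hj2.
    have /leq_sizeP -> := hf; last by [].
    have /leq_sizeP -> : (size (p n.+1) <= n.+2)%N by rewrite psize.
      by rewrite mulr0 subr0.
    by [].
  have -> : j = n.+1 by lia.
  have e : (p n.+1)`_n.+1 = lead_coef (p n.+1) by rewrite /lead_coef psize.
  by rewrite e /c divfK // subrr.
case: (IH _ hg) => a ha.
exists (fun i => if i == n.+1 then c else a i).
rewrite big_ord_recr /= eqxx.
rewrite (eq_bigr (fun i : 'I_n.+1 => a i *: p i)); last first.
  by move=> [i hi] _ /=; rewrite ifN // neq_ltn hi.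
by rewrite -ha subrK.
Qed.

Lemma coef_expand n (a : nat -> K) k : (k <= n)%N ->
  (iter k d (\sum_(i < n.+1) a i *: p i)).[0] = a k * (k`!)%:R.
Proof.
move=> hk; rewrite isum horner_sum (bigD1 (Ordinal (hk : k < n.+1)%N)) //=.
rewrite big1 ?addr0; last first.
  move=> [i hi] /= hne; rewrite iZ idp hornerZ hornerZ.
  case: (ltnP i k) => h; first by rewrite ffact_small // !mul0r mulr0.
  have hne' : i != k by apply: contraNneq hne => e; apply/eqP; apply: val_inj.
  rewrite (_ : (i - k)%N = (i - k).-1.+1); last by lia.
  by rewrite pz !mulr0.
by rewrite iZ idp hornerZ hornerZ subnn p0 hornerC mulr1 ffactnn.
Qed.

Lemma E n (f : {poly K}) : (size f <= n.+1)%N ->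
  f = \sum_(i < n.+1) ((iter i d f).[0] / (i`!)%:R) *: p i.
Proof.
move=> hf; case: (expand hf) => a ->.
apply: eq_bigr => [[i hi]] _ /=.
by rewrite coef_expand // mulfK // fact_neq0.
Qed.

Lemma S k (f : {poly K}) : (size f <= k.+1)%N -> (size (d f) <= k)%N.
Proof.
move=> hf; rewrite (E hf) dsum; apply: bigsize => i.
rewrite dZ (leq_trans (size_scale_leq _ _)) //.
case: i => [[|i]] /= hi; first by rewrite p0 d1 size_poly0.
by rewrite dp (leq_trans (size_scale_leq _ _)) // psize.
Qed.

Lemma SI i n (f : {poly K}) : (size f <= n.+1)%N -> (size (iter i d f) <= (n - i).+1)%N.
Proof.
move=> hf; elim: i => [|i IH] /=; first by rewrite subn0.
apply: (leq_trans (S IH)); lia.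
Qed.

Lemma const n (g : {poly K}) : d g = 0 -> (size g <= n.+1)%N -> g = (g.[0])%:P.
Proof.
move=> hd hs; rewrite {1}(E hs) big_ord_recl big1 ?addr0.
  by rewrite /= divr1 p0 alg_polyC.
by move=> i _; rewrite lift0 iterSr hd i0 horner0 mul0r scale0r.
Qed.

Lemma U m (g : {poly K}) (w : nat -> K) : (size g <= m.+1)%N ->
  (forall k, (k <= m)%N -> (iter k d g).[w k] = 0) -> g = 0.
Proof.
elim: m g w => [|m IH] g w hs hw.
  have hd : d g = 0 by apply/eqP; rewrite -size_poly_leq0; exact: S.
  have e := const hd hs; have := hw 0%N (leqnn _); rewrite /= e hornerC => ->.
  by rewrite polyC0.
have hd : d g = 0.
  apply: (IH _ (fun k => w k.+1) (S hs)) => k hk.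
  by rewrite -iterSr; apply: hw.
have e := const hd hs; have := hw 0%N (leq0n _); rewrite /= e hornerC => ->.
by rewrite polyC0.
Qed.

Lemma iter_shift k a (f : {poly K}) : iter k d (shiftp a f) = shiftp a (iter k d f).
Proof. by elim: k => //= k IH; rewrite IH dshift. Qed.

Lemma horner_shift a (f : {poly K}) : (shiftp a f).[0] = f.[a].
Proof. by rewrite /shiftp horner_comp !hornerE ?add0r. Qed.

Lemma size_shift a (f : {poly K}) : size (shiftp a f) = size f.
Proof. by rewrite /shiftp size_comp_poly2 // size_XaddC. Qed.

End Aux.
Unset Implicit Arguments. Set Strict Implicit.

Theorem mainTheorem9 (K : fieldType) (Kchar0 : [pchar K] =i pred0)
  (d : {poly K} -> {poly K}) (p : nat -> {poly K}) (z : nat -> K)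
  (t : nat -> nat -> {poly K})
  (hd : is_delta_op d) (hp : is_basic_seq d p)
  (ht : forall j : nat, is_goncarov_basis d (fun i => z (i + j)%N) (t j)) :
  (forall (xi : K) (n : nat),
     shiftp xi (t 0%N n) =
       \sum_(i < n.+1) ('C(n, i)%:R * (t i (n - i)%N).[xi]) *: p i) /\
  (forall n : nat,
     t 0%N n = \sum_(i < n.+1) ('C(n, i)%:R * (t i (n - i)%N).[0]) *: p i).
Proof.
case: hd => dlin [dshift [cX [_ dX]]].
case: hp => psize [p0 [pz dp]].
have KL : forall n i, (i <= n)%N ->
    iter i d (t 0%N n) = (n ^_ i)%:R *: t i (n - i)%N.
  move=> n i hin; apply/eqP; rewrite -subr_eq0; apply/eqP.
  apply: (U Kchar0 dlin dshift dX psize p0 pz dp (m := (n - i)%N) (w := fun k => z (k + i)%N)).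
    rewrite (leq_trans (size_polyD _ _)) // geq_max size_polyN.
    apply/andP; split; last first.
      by rewrite (leq_trans (size_scale_leq _ _)) // (ht i).1.
    by apply: (SI Kchar0 dlin dshift dX psize p0 pz dp); rewrite (ht 0%N).1.
  move=> k hk; rewrite (iB dlin) (iZ dlin) -iterD hornerD hornerN hornerZ.
  have h0 := (ht 0%N).2 (k + i)%N n; rewrite addn0 in h0; rewrite h0.
  rewrite ((ht i).2 k (n - i)%N).
  case: (eqVneq k (n - i)%N) => hk2.
    rewrite ifT; last by apply/eqP; lia.
    by rewrite -natrM ffact_fact // subrr.
  rewrite ifN; last by apply/eqP; lia.
  by rewrite mulr0 subrr.
have P1 : forall (xi : K) (n : nat),
     shiftp xi (t 0%N n) =
       \sum_(i < n.+1) ('C(n, i)%:R * (t i (n - i)%N).[xi]) *: p i.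
  move=> xi n.
  have hs : (size (shiftp xi (t 0%N n)) <= n.+1)%N
    by rewrite size_shift (ht 0%N).1.
  rewrite (E Kchar0 dlin dshift dX psize p0 pz dp hs).
  apply: eq_bigr => [[i hi]] _ /=; congr (_ *: _).
  rewrite (iter_shift dshift) horner_shift KL // hornerZ -bin_ffact natrM.
  have := fact_neq0 Kchar0 i => hne.
  by field.
split => // n; have := P1 0 n.
by rewrite /shiftp polyC0 addr0 comp_polyXr.
Qed.
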